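(* Let $k\ge 2$, $p\in(0,1)$, $q=1-p$, and let $L^{(k)}(z)=\sum_{n\ge 2}L^{(k)}_n(p)z^n$. Then, as formal power series in $z$, $$L^{(k)}(z)=\frac{z\,(kp-(k-1))\,S^{(k)}(p^{k-1}qz)-qz^2\big((2k-1)p-(2k-2)+(k-1)qz\big)}{q^2(1-z)^2}.$$
   Context: For $i\ge 1$, $s^{(k)}_i=\frac{k-1}{ki-1}\binom{ki-1}{i-1}$ and $S^{(k)}(z)=\sum_{i\ge1}s^{(k)}_i z^i$. For $n\ge 2$, $L^{(k)}_n(p)=(p^{k-1}q)^n\frac1q\sum_{j=k}^{(k-1)n} j\,d^{(k)}_{n,j}(1/p)^j$, where for $k\le j\le (k-1)n$, $d^{(k)}_{n,j}=\binom{kn-2-j}{n-2}-\sum_{\ell=1}^{\,n-\lceil j/(k-1)\rceil} s^{(k)}_\ell\binom{k(n-\ell)-1-j}{n-\ell-1}$. *)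

(* Defs.v *)
From mathcomp Require Import all_boot all_order all_algebra.
Set Implicit Arguments. Unset Strict Implicit. Unset Printing Implicit Defensive.
Import Order.TTheory GRing.Theory Num.Theory.
Local Open Scope ring_scope.

Section FPS.
Variable R : fieldType.

Definition fps := nat -> R.
Definition fadd (a b : fps) : fps := fun n => a n + b n.
Definition fsub (a b : fps) : fps := fun n => a n - b n.
Definition fscal (c : R) (a : fps) : fps := fun n => c * a n.
Definition fmul (a b : fps) : fps := fun n => \sum_(i < n.+1) a i * b (n - i)%N.
Definition fconst (c : R) : fps := fun n => if n is 0%N then c else 0.
Definition fX : fps := fun n => if n == 1%N then 1 else 0.
Definition fsubst_scale (c : R) (a : fps) : fps := fun n => c ^+ n * a n.

Definition s_coef (k i : nat) : R :=
  (k.-1)%:R / (k * i).-1%:R * ('C((k * i).-1, i.-1))%:R.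
Definition S_ser (k : nat) : fps := fun i => if i is 0%N then 0 else s_coef k i.

Definition ceil_div (j m : nat) : nat := ((j + m.-1) %/ m)%N.

Definition d_coef (k n j : nat) : R :=
  ('C(k * n - 2 - j, n - 2))%:R
  - \sum_(1 <= l < (n - ceil_div j k.-1).+1)
       s_coef k l * ('C(k * (n - l) - 1 - j, n - l - 1))%:R.

Definition L_coef (k : nat) (p : R) (n : nat) : R :=
  let q := 1 - p in
  (p ^+ k.-1 * q) ^+ n / q *
  \sum_(k <= j < (k.-1 * n).+1) j%:R * d_coef k n j * (p^-1) ^+ j.

Definition L_ser (k : nat) (p : R) : fps :=
  fun n => if (n < 2)%N then 0 else L_coef k p n.

End FPS.
Arguments fX {R}.

(* Main.v *)
Require Import Defs.
From mathcomp Require Import all_boot all_order all_algebra.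
From mathcomp Require Import zify ring lra.
From Stdlib Require Import FunctionalExtensionality.
Import Order.TTheory GRing.Theory Num.Theory.
Local Open Scope ring_scope.
Set Implicit Arguments. Unset Strict Implicit. Unset Printing Implicit Defensive.


Section Hagen.
Variable R : fieldType.
Variable m : nat.
Hypothesis hm : (0 < m)%N.
Local Notation k := m.+1.

Definition Aa (i a : nat) : R :=
  if i is i'.+1 then ('C(k*i+a, i))%:R - k%:R * ('C(k*i+a-1, i'))%:R else 1.

Lemma Aa_0 i : Aa i 0 = (i == 0%N)%:R.
Proof.
case: i => [//|i] /=.
have h : 'C(k * i.+1 + 0, i.+1) = (k * 'C(k * i.+1 + 0 - 1, i))%N.
  apply/eqP; rewrite addn0 subn1 -(eqn_pmul2l (ltn0Sn i)) -mul_bin_diag.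
  by rewrite mulnCA mulnA.
by rewrite h natrM subrr.
Qed.

Lemma Aa_S i a : Aa i a.+1 = Aa i a + (if i is i'.+1 then Aa i' (a + k) else 0).
Proof.
case: i => [|i]; first by rewrite /= addr0.
rewrite /Aa.
have e1 : (k * i.+1 + a.+1 = (k * i.+1 + a).+1)%N by lia.
have e2 : (k * i.+1 + a.+1 - 1 = k * i.+1 + a)%N by lia.
have e3 : (k * i + (a + k) = k * i.+1 + a)%N by lia.
rewrite e2 e1 binS; clear e1 e2.
case: i e3 => [|i] e3.
  rewrite !bin0 /=. ring.
rewrite e3.
have e4 : (k * i.+2 + a = (k * i.+2 + a - 1).+1)%N by lia.
have e5 : (k * i.+1 + (a + k) - 1 = k * i.+2 + a - 1)%N by lia.
have Pas : 'C(k * i.+2 + a, i.+1) = ('C(k * i.+2 + a - 1, i.+1) + 'C(k * i.+2 + a - 1, i))%N.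
  by rewrite {1}e4 binS.
rewrite Pas !natrD. ring.
Qed.

Lemma hagen M a b :
  \sum_(i < M.+1) Aa i a * ('C(k*(M-i)+b, M-i))%:R = ('C(k*M+a+b, M))%:R.
Proof.
elim: M a => [|M IH] a.
  by rewrite big_ord_recl big_ord0 /= !bin0 addr0 mulr1.
elim: a => [|a IHa].
  rewrite big_ord_recl big1 ?addr0; last by move=> i _; rewrite Aa_0 mul0r.
  by rewrite Aa_0 /= mul1r subn0 addn0.
rewrite (eq_bigr (fun i : 'I_M.+2 => Aa i a * ('C(k*(M.+1-i)+b, M.+1-i))%:R
    + (if val i is i'.+1 then Aa i' (a + k) else 0) * ('C(k*(M.+1-i)+b, M.+1-i))%:R));
  last by move=> i _; rewrite Aa_S mulrDl.
rewrite big_split /= IHa big_ord_recl /= mul0r add0r.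
rewrite (eq_bigr (fun i : 'I_M.+1 => Aa i (a + k) * ('C(k*(M-i)+b, M-i))%:R));
  last by move=> i _; rewrite /bump /= add1n subSS.
rewrite IH.
have e : (k * M.+1 + a.+1 + b = (k * M.+1 + a + b).+1)%N by lia.
rewrite e binS natrD addrC.
have -> : (k * M + (a + k) + b = k * M.+1 + a + b)%N by lia.
by rewrite addrC.
Qed.

End Hagen.


Section Fsec.
Variable R : realFieldType.
Variable m : nat.
Hypothesis hm : (0 < m)%N.
Local Notation k := m.+1.

Lemma s_Aa l : (0 < l)%N -> s_coef R k l = Aa R m l.-1 m.
Proof.
case: l => // l _ /=. rewrite /s_coef /Aa.
have eN : ((k * l.+1).-1 = k * l + m)%N by lia.
rewrite eN.
case: l eN => [|l] eN.
  rewrite /= muln0 add0n bin0 mulr1 divff // pnatr_eq0; lia.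
have h := mul_bin_diag (k * l.+1 + m) l.
have hN : (k * l.+1 + m)%:R != 0 :> R by rewrite pnatr_eq0; lia.
set N := (k * l.+1 + m)%N in h hN *.
set C := 'C(N, l.+1) in h *.
set C2 := 'C(N.-1, l) in h.
have -> : (N - 1 = N.-1)%N by lia.
have h2 : C2%:R = l.+1%:R * C%:R / N%:R :> R.
  by rewrite -natrM -h natrM mulrC mulKf.
rewrite /= h2 /N natrD natrM.
rewrite natrD natrM in hN.
rewrite -(addn1 m) -(addn1 l) !natrD in hN *. field. by [].
Qed.

Lemma s1 : s_coef R k 1 = 1.
Proof. by rewrite s_Aa. Qed.


Lemma binsym N a b : (a + b = N)%N -> 'C(N, a) = 'C(N, b).
Proof. by move=> <-; rewrite -bin_sub ?leq_addr // addKn. Qed.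

Definition Fc (n t : nat) : R := ('C(n-2+t, t))%:R -
  \sum_(1 <= l < n) (if (m * l <= t)%N then
     s_coef R k l * ('C(n-l-1 + (t - m * l), t - m * l))%:R else 0).

Lemma F0 n : (2 <= n)%N -> Fc n 0 = 1.
Proof.
move=> hn; rewrite /Fc bin0 big1_seq ?subr0 // => l /=.
rewrite mem_index_iota => /andP[hl _].
by have -> : (m * l <= 0)%N = false by lia.
Qed.

Lemma F2 n r : (2 <= n)%N -> (r <= m)%N -> Fc n (m * n.-1 + r) = 0.
Proof.
case: n => [|[|n]] // _ hr /=.
rewrite /Fc big_add1 /= big_mkord.
rewrite (eq_bigr (fun i : 'I_n.+1 => Aa R m i m * ('C(k*(n-i)+r, n-i))%:R)).
  rewrite hagen //.
  rewrite (@binsym _ _ n); last by lia.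
  have -> : (n.+2 - 2 + (m * n.+1 + r) = k * n + m + r)%N by lia.
  by rewrite subrr.
move=> i _.
have hi := ltn_ord i.
have -> : (m * i.+1 <= m * n.+1 + r)%N = true by apply/idP; nia.
rewrite s_Aa //=.
congr (_ * _%:R).
have e1 : (n.+2 - i.+1 - 1 + (m * n.+1 + r - m * i.+1) = k*(n-i)+r)%N by nia.
rewrite e1; apply: binsym; nia.
Qed.

Lemma F1 n t : Fc n.+3 t.+1 = Fc n.+2 t.+1 + Fc n.+3 t -
  (if t.+1 == m * n.+2 then s_coef R k n.+2 else 0).
Proof.
rewrite /Fc.
have -> : (n.+3 - 2 + t.+1 = (n.+1 + t).+1)%N by lia.
have -> : (n.+2 - 2 + t.+1 = n.+1 + t)%N by lia.
have -> : (n.+3 - 2 + t = n.+1 + t)%N by lia.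
rewrite binS natrD.
rewrite !(big_nat_recr n.+2) //=.
have hS : \sum_(1 <= l < n.+2) (if (m * l <= t.+1)%N then
     s_coef R k l * ('C(n.+3-l-1 + (t.+1 - m * l), t.+1 - m * l))%:R else 0)
  = \sum_(1 <= l < n.+2) (if (m * l <= t.+1)%N then
     s_coef R k l * ('C(n.+2-l-1 + (t.+1 - m * l), t.+1 - m * l))%:R else 0)
  + \sum_(1 <= l < n.+2) (if (m * l <= t)%N then
     s_coef R k l * ('C(n.+3-l-1 + (t - m * l), t - m * l))%:R else 0).
  rewrite -big_split /=.
  apply: eq_big_nat => l /andP[hl1 hl2].
  case: (ltngtP (m * l) t.+1) => hml.
  - have -> : (m * l <= t)%N = true by apply/idP; lia.
    have -> : (t.+1 - m * l = (t - m * l).+1)%N by lia.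
    have -> : (n.+3 - l - 1 + (t - m * l).+1 = (n.+3 - l - 1 + (t - m * l)).+1)%N by lia.
    rewrite binS natrD mulrDr addrC.
    have -> : (n.+3 - l - 1 + (t - m * l) = n.+2 - l - 1 + (t - m * l).+1)%N by lia.
    by rewrite addrC.
  - have -> : (m * l <= t)%N = false by lia.
    by rewrite add0r.
  - have -> : (m * l <= t)%N = false by lia.
    by rewrite hml subnn !addn0 !bin0 addr0.
have hL : (if (m * n.+2 <= t.+1)%N then s_coef R k n.+2 *
      ('C(n.+3 - n.+2 - 1 + (t.+1 - m * n.+2), t.+1 - m * n.+2))%:R else 0)
   = (if (m * n.+2 <= t)%N then s_coef R k n.+2 *
      ('C(n.+3 - n.+2 - 1 + (t - m * n.+2), t - m * n.+2))%:R else 0)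
     + (if t.+1 == m * n.+2 then s_coef R k n.+2 else 0).
  have -> : (n.+3 - n.+2 - 1 = 0)%N by lia.
  rewrite !add0n !binn mulr1.
  case: (ltngtP (m * n.+2) t.+1) => hml.
  - have -> : (m * n.+2 <= t)%N = true by apply/idP; lia.
    by rewrite addr0.
  - have -> : (m * n.+2 <= t)%N = false by lia.
    by rewrite addr0.
  - have -> : (m * n.+2 <= t)%N = false by lia.
    by rewrite add0r.
rewrite hS hL. set Y := \sum_(1 <= i < n.+2) (if (m * i <= t)%N then _ else _). set W := (if t.+1 == _ then _ else _). set Z := (if (m * n.+2 <= t)%N then _ else _). set X := \sum_(1 <= i < n.+2) _. ring.
Qed.

End Fsec.


Section Psec.
Variable R : realFieldType.
Variable m : nat.
Hypothesis hm : (0 < m)%N.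
Local Notation k := m.+1.
Local Notation Fc := (Fc R m).

Definition De (n t : nat) : R :=
  if n == 1%N then (t == 0%N)%:R else if (t < m * n.-1)%N then Fc n t else 0.
Definition sh (f : nat -> R) t := if t is t'.+1 then f t' else 0.

Lemma Fc2 t : (t < m)%N -> Fc 2 t = 1.
Proof.
move=> ht; rewrite /Fc big_nat1.
have -> : (m * 1 <= t)%N = false by lia.
by rewrite subn2 /= add0n binn subr0.
Qed.

Lemma De_supp n t : (2 <= n)%N -> (m * n.-1 <= t)%N -> De n t = 0.
Proof.
move=> h1 h2; rewrite /De.
have -> : (n == 1%N) = false by lia.
by have -> : (t < m * n.-1)%N = false by lia.
Qed.

Lemma Pas n t : (2 <= n)%N ->
  De n t = De n.-1 t + sh (De n) t - (if t == m * n.-1 then s_coef R k n.-1 else 0).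
Proof.
case: n => [|[|[|n]]] // _.
  rewrite /De /=; case: t => [|t] /=.
    rewrite muln1 hm Fc2 //.
    have -> : (0 == m * 1)%N = false by lia.
    by rewrite subr0 addr0.
  rewrite !muln1 /= add0r.
  case: (ltngtP t.+1 m) => h; case: eqP => he.
  - lia.
  - by rewrite !Fc2 ?subr0 //; lia.
  - lia.
  - by rewrite subr0.
  - by rewrite Fc2 ?s1 ?subrr //; lia.
  - lia.
rewrite /De /=.
case: t => [|t] /=.
  have -> : (0 < m * n.+2)%N = true by apply/idP; nia.
  have -> : (0 < m * n.+1)%N = true by apply/idP; nia.
  have -> : (0 == m * n.+2)%N = false by nia.
  by rewrite !F0 // subr0 addr0.
have hF1 := @F1 R m hm n t.
case: (ltnP t.+1 (m * n.+1)) => h1.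
  have -> : (t.+1 < m * n.+2)%N = true by apply/idP; nia.
  have -> : (t < m * n.+2)%N = true by apply/idP; nia.
  have -> : (t.+1 == m * n.+2) = false by nia.
  by rewrite hF1 [X in _ - X = _](_ : _ = 0) //; case: eqP => //; nia.
case: (ltngtP t.+1 (m * n.+2)) => h2.
  have e : t.+1 = (m * n.+2.-1 + (t.+1 - m * n.+1))%N by nia.
  have h0 : Fc n.+2 t.+1 = 0 by rewrite e F2 //; nia.
  rewrite hF1 h0.
  have -> : (t.+1 == m * n.+2) = false by nia.
  by rewrite !add0r !subr0.
- by rewrite addr0 subr0.
- have e1 : (m * n.+2 = m * n.+3.-1 + 0)%N by nia.
  have e2 : (m * n.+2 = m * n.+2.-1 + m)%N by nia.
  move: hF1; rewrite h2 eqxx.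
  rewrite {1}e1 F2 // {1}e2 F2 // add0r => h.
Qed.

Variable p : R.
Definition evs (f : nat -> R) N := \sum_(t < N) f t * p ^+ t.
Definition ev1 (f : nat -> R) N := \sum_(t < N) t%:R * f t * p ^+ t.

Lemma sum_ext (g : nat -> R) M N : (M <= N)%N ->
  (forall t, (M <= t)%N -> g t = 0) -> \sum_(t < N) g t = \sum_(t < M) g t.
Proof.
move=> hMN g0.
rewrite -!(big_mkord xpredT) (big_cat_nat (leq0n M) hMN) /=.
rewrite [X in _ + X]big1_seq ?addr0 // => t /andP[_].
by rewrite mem_index_iota => /andP[h _]; exact: g0.
Qed.

Lemma evs_sh f N : evs (sh f) N.+1 = p * evs f N.
Proof.
rewrite /evs big_ord_recl /= mul0r add0r mulr_sumr.
by apply: eq_bigr => i _; rewrite /bump /= add1n exprS mulrCA.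
Qed.

Lemma ev1_sh f N : ev1 (sh f) N.+1 = p * ev1 f N + p * evs f N.
Proof.
rewrite /ev1 /evs big_ord_recl /= mulr0 mul0r add0r !mulr_sumr -big_split /=.
apply: eq_bigr => i _; rewrite /bump /= add1n exprS -addn1 natrD. ring.
Qed.

Lemma spike_sum a v N : (a < N)%N ->
  \sum_(t < N) (if t == a :> nat then v else 0) * p ^+ t = v * p ^+ a.
Proof.
move=> ha.
rewrite (bigD1 (Ordinal ha)) //= eqxx big1 ?addr0 // => i hi.
have -> : (nat_of_ord i == a) = false.
  by apply/negbTE; apply: contra hi => /eqP h; apply/eqP/val_inj.
by rewrite mul0r.
Qed.

Lemma spike_sum1 a v N : (a < N)%N ->
  \sum_(t < N) t%:R * (if t == a :> nat then v else 0) * p ^+ t = a%:R * v * p ^+ a.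
Proof.
move=> ha.
rewrite (bigD1 (Ordinal ha)) //= eqxx big1 ?addr0 // => i hi.
have -> : (nat_of_ord i == a) = false.
  by apply/negbTE; apply: contra hi => /eqP h; apply/eqP/val_inj.
by rewrite mulr0 mul0r.
Qed.

Lemma evs_supp n N : (2 <= n)%N -> (m * n.-1 <= N)%N ->
  evs (De n) N = evs (De n) (m * n.-1).
Proof.
move=> h1 h2; rewrite /evs; apply: (sum_ext (g := fun t => De n t * p ^+ t) h2) => t ht; by rewrite De_supp // mul0r.
Qed.

Lemma ev1_supp n N : (2 <= n)%N -> (m * n.-1 <= N)%N ->
  ev1 (De n) N = ev1 (De n) (m * n.-1).
Proof.
move=> h1 h2; rewrite /ev1; apply: (sum_ext (g := fun t => t%:R * De n t * p ^+ t) h2) => t ht; by rewrite De_supp // mulr0 mul0r.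
Qed.

Lemma evs_S n N : (2 <= n)%N -> (m * n.-1 <= N)%N ->
  evs (De n) N.+1 = evs (De n) N.
Proof. by move=> h1 h2; rewrite !evs_supp //; lia. Qed.

Lemma ev1_S n N : (2 <= n)%N -> (m * n.-1 <= N)%N ->
  ev1 (De n) N.+1 = ev1 (De n) N.
Proof. by move=> h1 h2; rewrite !ev1_supp //; lia. Qed.

Lemma U_rec n N : (2 <= n)%N -> (m * n.-1 < N)%N ->
  (1 - p) * evs (De n) N = evs (De n.-1) N - s_coef R k n.-1 * p ^+ (m * n.-1).
Proof.
move=> h1 h2.
have E : evs (De n) N = evs (De n.-1) N + evs (sh (De n)) N
    - s_coef R k n.-1 * p ^+ (m * n.-1).
  rewrite /evs -(@spike_sum _ _ N) // -big_split -sumrB /=.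
  by apply: eq_bigr => t _; rewrite (Pas t h1) !mulrDl mulNr.
case: N h2 E => [|N] // h2 E.
rewrite evs_sh -(@evs_S n N) // in E.
rewrite mulrBl mul1r {1}E.
set A := evs _ _. set B := evs _ _. ring.
Qed.

Lemma V_rec n N : (2 <= n)%N -> (m * n.-1 < N)%N ->
  (1 - p) * ev1 (De n) N = ev1 (De n.-1) N + p * evs (De n) N
     - (m * n.-1)%:R * s_coef R k n.-1 * p ^+ (m * n.-1).
Proof.
move=> h1 h2.
have E : ev1 (De n) N = ev1 (De n.-1) N + ev1 (sh (De n)) N
    - (m * n.-1)%:R * s_coef R k n.-1 * p ^+ (m * n.-1).
  rewrite /ev1 -(@spike_sum1 _ _ N) // -big_split -sumrB /=.
  by apply: eq_bigr => t _; rewrite (Pas t h1) !mulrDr !mulrDl mulrN mulNr.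
case: N h2 E => [|N] // h2 E.
rewrite ev1_sh -(@evs_S n N) // -(@ev1_S n N) // in E; try lia.
rewrite mulrBl mul1r {1}E.
set A := ev1 _ _. set B := ev1 _ _. set C := evs _ _. ring.
Qed.

Lemma U1 N : (0 < N)%N -> evs (De 1) N = 1.
Proof.
case: N => // N _; rewrite /evs big_ord_recl /= big1 ?addr0 ?mulr1 // => i _.
by rewrite /De /= mul0r.
Qed.

Lemma V1 N : ev1 (De 1) N = 0.
Proof.
rewrite /ev1 big1 // => i _; rewrite /De /=.
by case: (nat_of_ord i) => [|j] /=; rewrite ?mul0r ?mulr0 ?mul0r.
Qed.

End Psec.


Lemma sum_rev (R : nmodType) (g : nat -> R) a b : (a <= b)%N ->
  \sum_(a <= j < b.+1) g j = \sum_(t < b.+1 - a) g (b - t)%N.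
Proof.
move=> hab.
rewrite big_nat_rev /=.
rewrite -{1}(add0n a) big_addn big_mkord.
apply: eq_bigr => i _; congr g.
have := ltn_ord i; lia.
Qed.

Section Csec.
Variable R : realFieldType.
Variable m : nat.
Hypothesis hm : (0 < m)%N.
Local Notation k := m.+1.
Local Notation Fc := (Fc R m).

Lemma ceil_le j x : (ceil_div j m <= x)%N = (j <= x * m)%N.
Proof.
rewrite /ceil_div -ltnS ltn_divLR // mulSn; lia.
Qed.

Lemma dF n t : (2 <= n)%N -> (t < m * n.-1)%N -> d_coef R k n (m * n - t) = Fc n t.
Proof.
move=> hn ht.
rewrite /d_coef /Fc.
set j := (m * n - t)%N.
have hj : (j + t = m * n)%N by rewrite /j; nia.
have -> : (k * n - 2 - j = n - 2 + t)%N by rewrite /j; nia.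
rewrite (@binsym _ _ t); last by lia.
congr (_ - _).
set c := ceil_div j k.-1.
have hmn : (m * n = m * n.-1 + m)%N by rewrite -mulnSr prednK //; lia.
have hc1 : (1 <= c)%N.
  have : ~~ (c <= 0)%N by rewrite /c /= ceil_le; lia.
  lia.
have hc2 : (c <= n)%N.
  rewrite /c /= ceil_le mulnC; clearbody j; lia.
rewrite [RHS](@big_cat_nat _ _ _ (n - c).+1) //=; last by lia.
rewrite [X in _ = _ + X]big1_seq ?addr0; last first.
  move=> l /andP[_]; rewrite mem_index_iota => /andP[h1 h2].
  have : ~~ (c <= n - l)%N by lia.
  rewrite /c /= ceil_le => h.
  by have -> : (m * l <= t)%N = false by nia.
apply: eq_big_nat => l /andP[h1 h2].
have : (c <= n - l)%N by lia.
rewrite /c /= ceil_le => h.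
have hl : (m * l <= t)%N by rewrite mulnBl in h; nia.
rewrite hl; congr (_ * _%:R).
have -> : (k * (n - l) - 1 - j = n - l - 1 + (t - m * l))%N.
  rewrite mulnBl in h; rewrite mulnBr mulSn; nia.
apply: binsym; lia.
Qed.

Variable p : R.
Hypothesis hp : p != 0.
Hypothesis hq : 1 - p != 0.

Lemma L_conv n N : (2 <= n)%N -> (m * n.-1 <= N)%N ->
  L_coef k p n = (1 - p) ^+ n.-1 *
    ((m * n)%:R * evs p (De R m n) N - ev1 p (De R m n) N).
Proof.
move=> hn hN.
rewrite /L_coef /= evs_supp // ev1_supp //.
have hfac : (p ^+ m * (1 - p)) ^+ n / (1 - p) = (1 - p) ^+ n.-1 * p ^+ (m * n).
  have e : (1 - p) ^+ n = (1 - p) ^+ n.-1 * (1 - p) by rewrite -exprSr prednK //; lia.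
  rewrite exprMn e -exprM. field. by [].
rewrite hfac -mulrA; congr (_ * _).
have -> : (m * n)%N = (m * n).+1.-1 by [].
rewrite sum_rev; last by nia.
have -> : ((m * n).+1 - k = m * n.-1)%N by nia.
rewrite /= /evs /ev1 !mulr_sumr -sumrB.
apply: eq_bigr => t _.
have ht := ltn_ord t.
have hD : De R m n t = Fc n t.
  rewrite /De; have -> : (n == 1%N) = false by lia.
  by rewrite ht.
rewrite hD dF // natrB; last by nia.
have e : p ^+ (m * n) = p ^+ t * p ^+ (m * n - t).
  by rewrite -exprD subnKC //; nia.
rewrite e exprVn.
have hpx : p ^+ (m * n - t) != 0 by rewrite expf_neq0.
field.
by [].
Qed.

End Csec.


Section Fps.
Variable R : fieldType.

Lemma fmul_spike (A B : fps R) a v n :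
  (forall i, A i = if i == a then v else 0) ->
  fmul A B n = if (a <= n)%N then v * B (n - a)%N else 0.
Proof.
move=> hA; rewrite /fmul.
case: leqP => h.
  have ha : (a < n.+1)%N by lia.
  rewrite (bigD1 (Ordinal ha)) //= hA eqxx big1 ?addr0 // => i hi.
  rewrite hA; have -> : (nat_of_ord i == a) = false.
    by apply/negbTE; apply: contra hi => /eqP e; apply/eqP/val_inj.
  by rewrite mul0r.
rewrite big1 // => i _; rewrite hA.
have -> : (nat_of_ord i == a) = false by have := ltn_ord i; lia.
by rewrite mul0r.
Qed.

Lemma fmul_comm_at (A B : fps R) n :
  fmul A B n = \sum_(i < n.+1) B i * A (n - i)%N.
Proof.
rewrite /fmul (reindex_inj rev_ord_inj) /=.
apply: eq_bigr => i _; rewrite mulrC; congr (_ * A _ ); last first.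
  congr B; have := ltn_ord i; lia.
Qed.

Lemma fmul_low (A B : fps R) n :
  (forall i, (3 <= i)%N -> B i = 0) ->
  fmul A B n.+2 = B 0%N * A n.+2 + B 1%N * A n.+1 + B 2%N * A n.
Proof.
move=> hB; rewrite fmul_comm_at !big_ord_recl big1 ?addr0.
  rewrite addrA; congr (_ + _ + _); congr (_ * A _); by rewrite /= ?subn0 ?subSS ?subn0.
by move=> i _; rewrite hB ?mul0r //; rewrite /bump /=; lia.
Qed.

Definition W : fps R := fsub (fconst 1) fX.

Lemma WW0 : fmul W W 0 = 1.
Proof. by rewrite /fmul big_ord_recl big_ord0 /W /fsub /fconst /fX /= subr0 mulr1 addr0. Qed.
Lemma WW1 : fmul W W 1 = -2.
Proof.
rewrite /fmul !big_ord_recl big_ord0 /W /fsub /fconst /fX /=.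
rewrite !subr0 !sub0r. ring.
Qed.
Lemma WW2 : fmul W W 2 = 1.
Proof.
rewrite /fmul !big_ord_recl big_ord0 /W /fsub /fconst /fX /=.
rewrite !subr0 !sub0r. ring.
Qed.
Lemma W_ge2 x : (2 <= x)%N -> W x = 0.
Proof. by case: x => [|[|x]] // _; rewrite /W /fsub /fconst /fX /= subrr. Qed.

Lemma WW3 i : (3 <= i)%N -> fmul W W i = 0.
Proof.
move=> hi; rewrite /fmul big1 // => j _.
have hj := ltn_ord j.
case: (leqP 2 j) => h; first by rewrite W_ge2 ?mul0r.
by rewrite (W_ge2 (x := (i - j)%N)) ?mulr0 //; lia.
Qed.

End Fps.

Unset Implicit Arguments. Set Strict Implicit. Set Printing Implicit Defensive.

Theorem lemma3p2 (R : realFieldType) (k : nat) (p : R) :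
  (2 <= k)%N -> 0 < p -> p < 1 ->
  let q := 1 - p in
  fmul (L_ser k p)
       (fscal (q ^+ 2) (fmul (fsub (fconst 1) fX) (fsub (fconst 1) fX)))
  = fsub
      (fmul fX (fscal (k%:R * p - (k.-1)%:R)
                      (fsubst_scale (p ^+ k.-1 * q) (S_ser R k))))
      (fmul (fscal q (fmul fX fX))
            (fadd (fconst ((2 * k).-1%:R * p - (2 * k - 2)%:R))
                  (fscal (k.-1%:R * q) fX))).
Proof.
move=> hk hp0 hp1 q.
case: k hk => [|m] // hk.
have hm : (0 < m)%N by lia.
have -> : ((2 * m.+1).-1 = 2 * m + 1)%N by lia.
have -> : ((2 * m.+1 - 2) = 2 * m)%N by lia.
have hpn : p != 0 by rewrite lt0r_neq0.
have hq : 1 - p != 0 by rewrite lt0r_neq0 // subr_gt0.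
apply: functional_extensionality => n.
rewrite [RHS]/fsub.
rewrite (@fmul_spike _ fX _ 1%N 1); last by [].
rewrite (@fmul_spike _ (fscal q (fmul fX fX)) _ 2%N q); last first.
  move=> i; rewrite /fscal (@fmul_spike _ fX _ 1%N 1) //.
  by case: i => [|[|[|i]]] /=; rewrite ?mulr0 ?mul1r ?mulr1.
case: n => [|[|n]].
- by rewrite /fmul big_ord_recl big_ord0 /L_ser /= mul0r addr0 subr0.
- rewrite /fmul !big_ord_recl big_ord0 /L_ser /= !mul0r /fscal /fsubst_scale /S_ser /=.
  by rewrite !mulr0 !add0r oppr0.
rewrite (@fmul_low R); last by move=> i hi; rewrite /fscal WW3 ?mulr0.
rewrite /fscal WW0 WW1 WW2.
have -> : (n.+2 - 1 = n.+1)%N by lia.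
have -> : (n.+2 - 2 = n)%N by lia.
rewrite /= /fsubst_scale /S_ser /fadd /fconst /fX /=.
set N := (m * n.+2)%N.
have hN1 : (m * n.+2.-1 < N)%N by rewrite /N; nia.
have hN2 : (m * n.+2.-1 <= N)%N by rewrite /N; nia.
have eU2 := U_rec hm p (n := n.+2) (N := N) isT hN1.
have eV2 := V_rec hm p (n := n.+2) (N := N) isT hN1.
have hU2 : evs p (De R m n.+2) N = (evs p (De R m n.+2.-1) N - s_coef R m.+1 n.+2.-1 * p ^+ (m * n.+2.-1)) / (1 - p).
  by rewrite -eU2 mulrC mulKf.
have hV2 : ev1 p (De R m n.+2) N = (ev1 p (De R m n.+2.-1) N + p * evs p (De R m n.+2) N
     - (m * n.+2.-1)%:R * s_coef R m.+1 n.+2.-1 * p ^+ (m * n.+2.-1)) / (1 - p).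
  by rewrite -eV2 mulrC mulKf.
rewrite /L_ser /= (L_conv hm hpn hq (n := n.+2) (N := N)) //.
case: n => [|[|n]] in N hN1 hN2 eU2 eV2 hU2 hV2 *.
- rewrite /= hV2 hU2 U1 ?V1; last by rewrite /N; nia.
  rewrite s1 //.
  have -> : (m * 2.-1)%N = m by rewrite /= muln1.
  rewrite /q !natrD !natrM /=.
  rewrite -(addn1 m) !natrD.
  field. by [].
- rewrite /= (L_conv hm hpn hq (n := 2) (N := N)) //; last by rewrite /N; nia.
  have hN3 : (m * 2.-1 < N)%N by rewrite /N; nia.
  have eU := U_rec hm p (n := 2) (N := N) isT hN3.
  have eV := V_rec hm p (n := 2) (N := N) isT hN3.
  have hU : evs p (De R m 2) N = (evs p (De R m 2.-1) N - s_coef R m.+1 2.-1 * p ^+ (m * 2.-1)) / (1 - p).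
    by rewrite -eU mulrC mulKf.
  have hV : ev1 p (De R m 2) N = (ev1 p (De R m 2.-1) N + p * evs p (De R m 2) N
     - (m * 2.-1)%:R * s_coef R m.+1 2.-1 * p ^+ (m * 2.-1)) / (1 - p).
    by rewrite -eV mulrC mulKf.
  rewrite hV2 hU2 /= hV hU U1 ?V1 ?s1 //; last by rewrite /N; nia.
  have -> : (m * 2.-1)%N = m by rewrite /= muln1.
  rewrite exprMn -exprM /q !natrM.
  field. by [].
rewrite /= (L_conv hm hpn hq (n := n.+3) (N := N)) //; last by rewrite /N; nia.
rewrite (L_conv hm hpn hq (n := n.+2) (N := N)) //; last by rewrite /N; nia.
have hN3 : (m * n.+3.-1 < N)%N by rewrite /N; nia.
have eU := U_rec hm p (n := n.+3) (N := N) isT hN3.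
have eV := V_rec hm p (n := n.+3) (N := N) isT hN3.
have hU : evs p (De R m n.+3) N = (evs p (De R m n.+3.-1) N - s_coef R m.+1 n.+3.-1 * p ^+ (m * n.+3.-1)) / (1 - p).
  by rewrite -eU mulrC mulKf.
have hV : ev1 p (De R m n.+3) N = (ev1 p (De R m n.+3.-1) N + p * evs p (De R m n.+3) N
   - (m * n.+3.-1)%:R * s_coef R m.+1 n.+3.-1 * p ^+ (m * n.+3.-1)) / (1 - p).
  by rewrite -eV mulrC mulKf.
rewrite hV2 hU2 /= hV hU /=.
rewrite exprMn -exprM /q !exprS !natrM.
field. by [].
Qed.
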